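(* Let $f:\mathbb{R}^n\times\mathbb{R}^p\times\mathbb{R}^q\to\mathbb{R}^n$ be continuously differentiable, let $N:\mathbb{R}^n\to\mathbb{R}^p$ be a neural network controller, and $f^{\mathsf c}(x,w)=f(x,N(x),w)$. Let $T\in\mathbb{R}^{n\times n}$ be invertible, $\Phi(x)=Tx$, and define the transformed system $\dot y=g^{\mathsf c}(y,w):=Tf(T^{-1}y,N'(y),w)$ with $N'(y):=N(T^{-1}y)$. Fix an interval $[\underline z,\overline z]\subseteq\mathbb{R}^n$ and $[\underline w,\overline w]\subseteq\mathbb{R}^q$. Let $(C,\underline d,\overline d)$ be a local affine bound of $N$ on $[\underline z,\overline z]$ and $[\underline u,\overline u]$ with $\underline u=C^+\underline z+C^-\overline z+\underline d$, $\overline u=C^-\underline z+C^+\overline z+\overline d$. Let $[\mathsf J_x]\in\mathbb{IR}^{n\times n}$, $[\mathsf J_u]\in\mathbb{IR}^{n\times p}$, $[\mathsf J_w]\in\mathbb{IR}^{n\times q}$ be interval matrices such that $D_xf(x,u,w)\in[\mathsf J_x]$, $D_uf(x,u,w)\in[\mathsf J_u]$, $D_wf(x,u,w)\in[\mathsf J_w]$ for all $(x,u,w)\in[\underline z,\overline z]\times[\underline u,\overline u]\times[\underline w,\overline w]$. Fix $\mathring x\in[\underline z,\overline z]$, $\mathring u=N(\mathring x)$, $\mathring w\in[\underline w,\overline w]$, and let $[\mathsf R]:=-[\mathsf J_x]\mathring x-[\mathsf J_u]\mathring u+[\mathsf J_w]([\underline w,\overline w]-\mathring w)+f(\mathring x,\mathring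 u,\mathring w)$ (interval arithmetic). For an interval $[\underline y,\overline y]$ let $(C',\underline d',\overline d')$ be a local affine bound of $N'$ on $[\underline y,\overline y]$, and define $$[\mathsf G^{\mathsf c}(\underline y,\overline y,\underline w,\overline w)]:=T\Big(\big([\mathsf J_x]+[\mathsf J_u](C'T)\big)\big(T^{-1}[\underline y,\overline y]\big)\Big)+T\big([\mathsf J_u][\underline d',\overline d']\big)+T[\mathsf R],$$ evaluated in interval arithmetic (real matrices/vectors treated as degenerate intervals). Then $\mathsf G^{\mathsf c}$ is a $\Phi([\underline z,\overline z])$-localized inclusion function for $g^{\mathsf c}$: for every interval $[\underline y,\overline y]\subseteq\Phi([\underline z,\overline z])=\{Tx:x\in[\underline z,\overline z]\}$, every $y\in[\underline y,\overline y]$ and every $w\in[\underline w,\overline w]$, $g^{\mathsf c}(y,w)\in[\mathsf G^{\mathsf c}(\underline y,\overline y,\underline w,\overline w)]$.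
   Context: Interval arithmetic: $\mathbb{IR}^{m}$ (resp. $\mathbb{IR}^{m\times k}$) denotes intervals (interval matrices) $[\underline A,\overline A]=\{A:\underline A\le A\le\overline A\}$ entrywise. Operations: $[\underline a,\overline a]+[\underline b,\overline b]=[\underline a+\underline b,\overline a+\overline b]$ (entrywise for vectors/matrices); $[\underline a,\overline a]\cdot[\underline b,\overline b]=[\min S,\max S]$ with $S=\{\underline a\underline b,\underline a\overline b,\overline a\underline b,\overline a\overline b\}$; $([A][B])_{ij}=\sum_k[A]_{ik}\cdot[B]_{kj}$. A real number $c$ is the interval $[c,c]$; subtracting a real vector shifts the interval. Neural network: $N(x)=W^{(k)}\xi^{(k)}+b^{(k)}$, $\xi^{(0)}=x$, $\xi^{(i)}=\phi^{(i-1)}(W^{(i-1)}\xi^{(i-1)}+b^{(i-1)})$, with diagonal activations satisfying $0\le(\phi_j(a)-\phi_j(b))/(a-b)\le1$. Local affine bound: for an interval $[\underline\xi,\overline\xi]$, a tuple $(C,\underline d,\overline d)$ with $Cx+\underline d\le N(x)\le Cx+\overline d$ for every $x\in[\underline\xi,\overline\xi]$ (such bounds are assumed available, e.g. from CROWN). For a matrix $C$, $C^+_{ij}=\max(C_{ij},0)$ and $C^-=C-C^+$. An $\mathcal S$-localized inclusion function $\mathsf G$ for $g^{\mathsf c}$ is one whose interval output contains $g^{\mathsf c}(y,w)$ for all $y\in[\underline y,\overline y]$, $w\in[\underline w,\overline w]$, whenever $[\underline y,\overline y]\subseteq\mathcal S$. *)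

(* Defs.v *)
From HB Require Import structures.
From mathcomp Require Import all_boot all_order all_algebra.
From mathcomp Require Import boolp classical_sets reals topology normedtype derive.
Set Implicit Arguments. Unset Strict Implicit. Unset Printing Implicit Defensive.
Import Order.TTheory GRing.Theory Num.Theory.
Import numFieldNormedType.Exports.
Local Open Scope ring_scope.

Section Defs.
Variable R : realType.

Definition lemx m k (A B : 'M[R]_(m, k)) : Prop := forall i j, A i j <= B i j.

(* an interval matrix [lo, hi] is represented by the pair (lo, hi) *)
Definition imx m k := ('M[R]_(m, k) * 'M[R]_(m, k))%type.

Definition in_imx m k (A : 'M[R]_(m, k)) (I : imx m k) : Prop :=
  lemx I.1 A /\ lemx A I.2.

Definition pt m k (A : 'M[R]_(m, k)) : imx m k := (A, A).

Definition iprod (a b : R * R) : R * R :=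
  let s1 := a.1 * b.1 in let s2 := a.1 * b.2 in
  let s3 := a.2 * b.1 in let s4 := a.2 * b.2 in
  (Num.min (Num.min s1 s2) (Num.min s3 s4),
   Num.max (Num.max s1 s2) (Num.max s3 s4)).

Definition imx_add m k (A B : imx m k) : imx m k := (A.1 + B.1, A.2 + B.2).

Definition imx_opp m k (A : imx m k) : imx m k := (- A.2, - A.1).

Definition imx_mul m l k (A : imx m l) (B : imx l k) : imx m k :=
  (\matrix_(i, j) \sum_(r < l) (iprod (A.1 i r, A.2 i r) (B.1 r j, B.2 r j)).1,
   \matrix_(i, j) \sum_(r < l) (iprod (A.1 i r, A.2 i r) (B.1 r j, B.2 r j)).2).

Definition in_box m (x lo hi : 'cV[R]_m) : Prop := lemx lo x /\ lemx x hi.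

Definition posm m k (C : 'M[R]_(m, k)) : 'M[R]_(m, k) :=
  map_mx (fun c => Num.max c 0) C.
Definition negm m k (C : 'M[R]_(m, k)) : 'M[R]_(m, k) := C - posm C.

Definition local_affine_bound m k (N : 'cV[R]_m -> 'cV[R]_k) (lo hi : 'cV[R]_m)
  (C : 'M[R]_(k, m)) (dlo dhi : 'cV[R]_k) : Prop :=
  forall x, in_box x lo hi -> lemx (C *m x + dlo) (N x) /\ lemx (N x) (C *m x + dhi).

Definition nn_dim (n : nat) (d : nat -> nat) (i : nat) : nat :=
  match i with 0 => n | i'.+1 => d i' end.

Fixpoint nn_xi (n : nat) (d : nat -> nat)
  (W : forall i, 'M[R]_(nn_dim n d i.+1, nn_dim n d i))
  (b : forall i, 'cV[R]_(nn_dim n d i.+1))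
  (phi : forall i, 'I_(nn_dim n d i.+1) -> R -> R)
  (x : 'cV[R]_n) (i : nat) : 'cV[R]_(nn_dim n d i) :=
  match i return 'cV[R]_(nn_dim n d i) with
  | 0 => x
  | i'.+1 => \col_j phi i' j ((W i' *m nn_xi W b phi x i' + b i') j 0)
  end.

Definition is_nn n p (N : 'cV[R]_n -> 'cV[R]_p) : Prop :=
  exists (k : nat) (d : nat -> nat)
    (W : forall i, 'M[R]_(nn_dim n d i.+1, nn_dim n d i))
    (b : forall i, 'cV[R]_(nn_dim n d i.+1))
    (phi : forall i, 'I_(nn_dim n d i.+1) -> R -> R)
    (Wk : 'M[R]_(p, nn_dim n d k)) (bk : 'cV[R]_p),
    (forall i, (i < k)%N -> forall j (a c : R), a != c ->
        0 <= (phi i j a - phi i j c) / (a - c) <= 1) /\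
    (forall x, N x = Wk *m nn_xi W b phi x k + bk).

(* Jacobian matrix (rows = output components, columns = input components) *)
Definition jac m k (g : 'cV[R]_m -> 'cV[R]_k) (a : 'cV[R]_m) : 'M[R]_(k, m) :=
  \matrix_(i, j) ('d g a (delta_mx j 0)) i 0.

Definition Dx n p q (f : 'cV[R]_n -> 'cV[R]_p -> 'cV[R]_q -> 'cV[R]_n) x u w :=
  jac (fun x' => f x' u w) x.
Definition Du n p q (f : 'cV[R]_n -> 'cV[R]_p -> 'cV[R]_q -> 'cV[R]_n) x u w :=
  jac (fun u' => f x u' w) u.
Definition Dw n p q (f : 'cV[R]_n -> 'cV[R]_p -> 'cV[R]_q -> 'cV[R]_n) x u w :=
  jac (fun w' => f x u w') w.

(* f continuously differentiable on R^n x R^p x R^q: differentiable everywhere,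
   and its derivative is continuous (tested on each direction; finite dim.) *)
Definition C1 n p q (f : 'cV[R]_n -> 'cV[R]_p -> 'cV[R]_q -> 'cV[R]_n) : Prop :=
  let F := fun z : 'cV[R]_n * 'cV[R]_p * 'cV[R]_q => f z.1.1 z.1.2 z.2 in
  (forall z, differentiable F z) /\ (forall v, continuous (fun z => 'd F z v)).

Definition Rbox n p q (f : 'cV[R]_n -> 'cV[R]_p -> 'cV[R]_q -> 'cV[R]_n)
  (Jx : imx n n) (Ju : imx n p) (Jw : imx n q)
  (xo : 'cV[R]_n) (uo : 'cV[R]_p) (wo wlo whi : 'cV[R]_q) : imx n 1 :=
  imx_add
    (imx_add
      (imx_add (imx_opp (imx_mul Jx (pt xo))) (imx_opp (imx_mul Ju (pt uo))))
      (imx_mul Jw (imx_add (wlo, whi) (pt (- wo)))))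
    (pt (f xo uo wo)).

Definition Gc n p (T : 'M[R]_n) (Jx : imx n n) (Ju : imx n p) (Rv : imx n 1)
  (C' : 'M[R]_(p, n)) (dlo' dhi' : 'cV[R]_p) (ylo yhi : 'cV[R]_n) : imx n 1 :=
  imx_add
    (imx_add
      (imx_mul (pt T)
        (imx_mul (imx_add Jx (imx_mul Ju (pt (C' *m T))))
                 (imx_mul (pt (invmx T)) (ylo, yhi))))
      (imx_mul (pt T) (imx_mul Ju (dlo', dhi'))))
    (imx_mul (pt T) Rv).

End Defs.

(* Main.v *)
Require Import Defs.
From HB Require Import structures.
From mathcomp Require Import all_boot all_order all_algebra.
From mathcomp Require Import boolp classical_sets functions reals topology normedtype derive.
From mathcomp Require Import ring lra.
Set Implicit Arguments. Unset Strict Implicit. Unset Printing Implicit Defensive.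
Import Order.TTheory GRing.Theory Num.Theory.
Import numFieldNormedType.Exports.
Local Open Scope classical_set_scope.
Local Open Scope ring_scope.

Section IA.
Variable R : realType.

Lemma iprod_in (a1 a2 b1 b2 a b : R) : a1 <= a <= a2 -> b1 <= b <= b2 ->
  (iprod (a1, a2) (b1, b2)).1 <= a * b <= (iprod (a1, a2) (b1, b2)).2.
Proof.
move=> /andP[ha1 ha2] /andP[hb1 hb2]; rewrite /iprod /=.
apply/andP; split.
  rewrite !ge_min.
  have [b0|b0] := lerP 0 b.
    have h1 : a1 * b <= a * b by nra.

    have [a0|a0] := lerP 0 a1.
      have HH : a1 * b1 <= a * b by nra.
      by rewrite HH ?orbT.
    have HH : a1 * b2 <= a * b by nra.
    by rewrite HH ?orbT.
  have h1 : a2 * b <= a * b by nra.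
  have [a0|a0] := lerP 0 a2.
    have HH : a2 * b1 <= a * b by nra.
    by rewrite HH ?orbT.
  have HH : a2 * b2 <= a * b by nra.
  by rewrite HH ?orbT.
rewrite !le_max.
have [b0|b0] := lerP 0 b.
  have h1 : a * b <= a2 * b by nra.
  have [a0|a0] := lerP 0 a2.
    have HH : a * b <= a2 * b2 by nra.
    by rewrite HH ?orbT.
  have HH : a * b <= a2 * b1 by nra.
  by rewrite HH ?orbT.
have h1 : a * b <= a1 * b by nra.
have [a0|a0] := lerP 0 a1.
  have HH : a * b <= a1 * b2 by nra.
  by rewrite HH ?orbT.
have HH : a * b <= a1 * b1 by nra.
by rewrite HH ?orbT.
Qed.

Lemma in_imx_mul m l k (A : 'M[R]_(m,l)) (B : 'M[R]_(l,k)) IA IB :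
  in_imx A IA -> in_imx B IB -> in_imx (A *m B) (imx_mul IA IB).
Proof.
move=> [hA1 hA2] [hB1 hB2]; split => i j; rewrite !mxE; apply: ler_sum => r _;
  have /andP[h1 h2] := @iprod_in (IA.1 i r) (IA.2 i r) (IB.1 r j) (IB.2 r j) (A i r) (B r j)
    (introT andP (conj (hA1 i r) (hA2 i r))) (introT andP (conj (hB1 r j) (hB2 r j))); done.
Qed.

Lemma in_imx_add m k (A B : 'M[R]_(m,k)) IA IB :
  in_imx A IA -> in_imx B IB -> in_imx (A + B) (imx_add IA IB).
Proof. by move=> [hA1 hA2] [hB1 hB2]; split => i j; rewrite !mxE lerD. Qed.

Lemma in_imx_opp m k (A : 'M[R]_(m,k)) IA :
  in_imx A IA -> in_imx (- A) (imx_opp IA).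
Proof. by move=> [hA1 hA2]; split => i j; rewrite !mxE lerN2. Qed.

Lemma in_imx_pt m k (A : 'M[R]_(m,k)) : in_imx A (pt A).
Proof. by split => i j. Qed.

End IA.

Section Aux.
Variable R : realType.

Lemma diff_coordE m k (M N : 'M[R]_(m,k)) i j :
  'd (fun X : 'M[R]_(m,k) => X i j) M N = N i j.
Proof.
have @f : {linear 'M[R]_(m, k) -> R^o}.
  by exists (fun N : 'M[R]_(_, _) => N i j); do 2![eexists]; do ?[constructor];
     rewrite ?mxE// => ? *; rewrite ?mxE//; move=> ?; rewrite !mxE.
rewrite (_ : (fun _ => _) = f) //.
by rewrite diff_lin //; exact: coord_continuous.
Qed.

Lemma mvt_line (V : normedModType R) k (g : V -> 'cV[R]_k) a v i :
 (forall z, differentiable g z) ->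
 exists2 t : R, 0 <= t <= 1 & (g (v + a) - g a) i 0 = ('d g (t *: v + a) v) i 0.
Proof.
move=> dg.
pose h := fun t : R => t *: v + a.
have hdiff t : is_diff t h ( *:%R ^~ v).
  have H1 := @is_diff_scalel R V t v.
  have H2 := @is_diff_cst R R^o V a t.
  have H3 := is_diffD H1 H2.
  have -> : h = (( *:%R ^~ v) + cst a) by apply/funext.
  apply: (is_diff_eq H3); by apply/funext => s /=; rewrite addr0.
have gdiff t : differentiable (g \o h) t.
  by apply: differentiable_comp => //; exact: ex_diff.
pose psi := fun t : R => (g (h t)) i 0.
have psidiff t : differentiable psi t.
  apply: (@differentiable_comp _ _ _ _ (g \o h) (fun X : 'cV[R]_k => X i 0)) => //.
  exact: differentiable_coord.
have dpsi (t : R) : is_derive t (1 : R) psi (('d g (h t) v) i 0).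
  apply: DeriveDef; first exact: diff_derivable.
  rewrite deriveE // (@diff_comp _ _ _ _ (g \o h) (fun X : 'cV[R]_k => X i 0)) //=; last exact: differentiable_coord.
  rewrite diff_coordE (diff_comp ex_diff (dg _)) /=.
  by rewrite diff_val scale1r.
have cpsi : {within `[(0:R), 1], continuous psi}.
  apply: continuous_subspaceT => x.
  exact: differentiable_continuous.
have [c c01 hc] := @MVT_segment R psi (fun t => ('d g (h t) v) i 0) 0 1 ler01 (fun x _ => dpsi x) cpsi.
exists c; first by move: c01; rewrite in_itv.
by move: hc; rewrite /psi /h scale0r add0r scale1r subr0 mulr1 !mxE.

Qed.

Lemma diff_jac m k (g : 'cV[R]_m -> 'cV[R]_k) x v i :
  ('d g x v) i 0 = (jac g x *m v) i 0.
Proof.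
have -> : v = \sum_(j < m) v j 0 *: delta_mx j 0.
  apply/matrixP => a b; rewrite summxE (bigD1 a) //= big1 ?addr0.
    have -> : b = 0 by apply/val_inj; case: b => -[].
    by rewrite !mxE !eqxx mulr1.
  by move=> j /negbTE ja; rewrite !mxE eq_sym ja mulr0.
rewrite linear_sum summxE mulmx_sumr summxE; apply: eq_bigr => j _.
rewrite linearZ /= mxE -scalemxAr mxE; congr (_ * _).
rewrite mxE (bigD1 j) //= big1 ?addr0; first by rewrite !mxE !eqxx mulr1.
by move=> l /negbTE lj; rewrite !mxE lj mulr0.
Qed.


Section F.
Variables (n p q : nat) (f : 'cV[R]_n -> 'cV[R]_p -> 'cV[R]_q -> 'cV[R]_n).
Hypothesis hf : C1 f.

Let F := fun z : 'cV[R]_n * 'cV[R]_p * 'cV[R]_q => f z.1.1 z.1.2 z.2.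

Lemma C1_dx u w x : differentiable (fun x' => f x' u w) x.
Proof.
have -> : (fun x' => f x' u w) = F \o (fun x' => ((x', u), w)) by [].
apply: differentiable_comp; last exact: hf.1.
apply: differentiable_pair; last exact: differentiable_cst.
apply: differentiable_pair; last exact: differentiable_cst.
exact: ex_diff.
Qed.

Lemma C1_du x w u : differentiable (fun u' => f x u' w) u.
Proof.
have -> : (fun u' => f x u' w) = F \o (fun u' => ((x, u'), w)) by [].
apply: differentiable_comp; last exact: hf.1.
apply: differentiable_pair; last exact: differentiable_cst.
apply: differentiable_pair; first exact: differentiable_cst.
exact: ex_diff.
Qed.

Lemma C1_dw x u w : differentiable (fun w' => f x u w') w.
Proof.
have -> : (fun w' => f x u w') = F \o (fun w' => ((x, u), w')) by [].
apply: differentiable_comp; last exact: hf.1.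
apply: differentiable_pair; first exact: differentiable_cst.
exact: ex_diff.
Qed.

Lemma row_mvt x u w xo uo wo i :
 exists tx, exists tu, exists tw, [/\ 0 <= tx <= 1, 0 <= tu <= 1, 0 <= tw <= 1 &
   (f x u w - f xo uo wo) i 0 =
     (Dx f (tx *: (x - xo) + xo) uo wo *m (x - xo)) i 0
   + (Du f x (tu *: (u - uo) + uo) wo *m (u - uo)) i 0
   + (Dw f x u (tw *: (w - wo) + wo) *m (w - wo)) i 0].
Proof.
have [tx tx01 hx] := @mvt_line _ _ _ xo (x - xo) i (C1_dx uo wo).
have [tu tu01 hu] := @mvt_line _ _ _ uo (u - uo) i (C1_du x wo).
have [tw tw01 hw] := @mvt_line _ _ _ wo (w - wo) i (C1_dw x u).
exists tx, tu, tw; split => //.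
rewrite /Dx /Du /Dw -!diff_jac -hx -hu -hw !subrK !mxE.
ring.
Qed.

End F.
Lemma box_convex m (a b lo hi : 'cV[R]_m) (t : R) :
  in_box a lo hi -> in_box b lo hi -> 0 <= t <= 1 -> in_box (t *: (b - a) + a) lo hi.
Proof.
move=> [ha1 ha2] [hb1 hb2] /andP[t0 t1]; split => i j; rewrite !mxE.
  have := ha1 i j; have := hb1 i j; nra.
have := ha2 i j; have := hb2 i j; nra.
Qed.

Lemma ubox_lo m k (C : 'M[R]_(k,m)) (zlo zhi x : 'cV[R]_m) (d : 'cV[R]_k) :
  in_box x zlo zhi -> lemx (posm C *m zlo + negm C *m zhi + d) (C *m x + d).
Proof.
move=> [h1 h2] i j; rewrite !mxE lerD2r -big_split /=; apply: ler_sum => l _.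
rewrite !mxE; have := h1 l j; have := h2 l j.
have [c0|c0] := lerP 0 (C i l).
  nra.
nra.
Qed.

Lemma ubox_hi m k (C : 'M[R]_(k,m)) (zlo zhi x : 'cV[R]_m) (d : 'cV[R]_k) :
  in_box x zlo zhi -> lemx (C *m x + d) (negm C *m zlo + posm C *m zhi + d).
Proof.
move=> [h1 h2] i j; rewrite !mxE lerD2r -big_split /=; apply: ler_sum => l _.
rewrite !mxE; have := h1 l j; have := h2 l j.
have [c0|c0] := lerP 0 (C i l).
  nra.
nra.
Qed.

Lemma zid m k (f fo a b c d e g h : 'M[R]_(m,k)) :
  f - fo = a - b + (c - d) + (e - g) -> f = a + h + (c - h) + (- b + - d + (e - g) + fo).
Proof.
move/matrixP => H; apply/matrixP => i j; have := H i j; rewrite !mxE; lra.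
Qed.

Lemma rowmul m l k (M : 'I_m -> 'M[R]_(m,l)) (v : 'M[R]_(l,k)) i j :
  ((\matrix_(i0, j0) M i0 i0 j0) *m v) i j = (M i *m v) i j.
Proof. by rewrite !mxE; apply: eq_bigr => r _; rewrite mxE. Qed.

End Aux.

Theorem proposition2 (R : realType) (n p q : nat)
  (f : 'cV[R]_n -> 'cV[R]_p -> 'cV[R]_q -> 'cV[R]_n)
  (N : 'cV[R]_n -> 'cV[R]_p) (T : 'M[R]_n)
  (hf : C1 f) (hN : is_nn N) (hT : T \in unitmx)
  (zlo zhi : 'cV[R]_n) (wlo whi : 'cV[R]_q)
  (C : 'M[R]_(p, n)) (dlo dhi : 'cV[R]_p)
  (hC : local_affine_bound N zlo zhi C dlo dhi)
  (Jx : imx R n n) (Ju : imx R n p) (Jw : imx R n q)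
  (hJ : forall x u w, in_box x zlo zhi ->
     in_box u (posm C *m zlo + negm C *m zhi + dlo)
              (negm C *m zlo + posm C *m zhi + dhi) ->
     in_box w wlo whi ->
     [/\ in_imx (Dx f x u w) Jx, in_imx (Du f x u w) Ju & in_imx (Dw f x u w) Jw])
  (xo : 'cV[R]_n) (wo : 'cV[R]_q)
  (hxo : in_box xo zlo zhi) (hwo : in_box wo wlo whi) :
  let uo := N xo in
  let Rv := Rbox f Jx Ju Jw xo uo wo wlo whi in
  let N' := fun y : 'cV[R]_n => N (invmx T *m y) in
  let gc := fun (y : 'cV[R]_n) (w : 'cV[R]_q) => T *m f (invmx T *m y) (N' y) w in
  forall ylo yhi : 'cV[R]_n,
    (forall y, in_box y ylo yhi -> exists2 x, in_box x zlo zhi & y = T *m x) ->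
  forall (C' : 'M[R]_(p, n)) (dlo' dhi' : 'cV[R]_p),
    local_affine_bound N' ylo yhi C' dlo' dhi' ->
  forall y w, in_box y ylo yhi -> in_box w wlo whi ->
    in_imx (gc y w) (Gc T Jx Ju Rv C' dlo' dhi' ylo yhi).
Proof.
move=> uo Rv N' gc ylo yhi hy C' dlo' dhi' hC' y w hyb hw.
pose x := invmx T *m y.
have [x0 hx0 ey] := hy y hyb.
have hx : in_box x zlo zhi by rewrite /x ey mulKmx.
pose ulo := posm C *m zlo + negm C *m zhi + dlo.
pose uhi := negm C *m zlo + posm C *m zhi + dhi.
have ubox z : in_box z zlo zhi -> in_box (N z) ulo uhi.
  move=> hz; have [h1 h2] := hC z hz; split => i j.
    exact: le_trans (ubox_lo C dlo hz i j) (h1 i j).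
  exact: le_trans (h2 i j) (ubox_hi C dhi hz i j).
pose u := N x.
have hu := ubox x hx.
have huo : in_box uo ulo uhi := ubox xo hxo.
have hrow : forall i : 'I_n, exists M : 'M[R]_(n,n) * 'M[R]_(n,p) * 'M[R]_(n,q),
   [/\ in_imx M.1.1 Jx, in_imx M.1.2 Ju, in_imx M.2 Jw &
   (f x u w - f xo uo wo) i 0 =
     (M.1.1 *m (x - xo)) i 0 + (M.1.2 *m (u - uo)) i 0 + (M.2 *m (w - wo)) i 0].
  move=> i.
  have [tx [tu [tw [tx01 tu01 tw01 e]]]] := row_mvt hf x u w xo uo wo i.
  exists (Dx f (tx *: (x - xo) + xo) uo wo, Du f x (tu *: (u - uo) + uo) wo,
          Dw f x u (tw *: (w - wo) + wo)) => /=.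
  have [h1 _ _] := hJ _ uo wo (box_convex hxo hx tx01) huo hwo.
  have [_ h2 _] := hJ x _ wo hx (box_convex huo hu tu01) hwo.
  have [_ _ h3] := hJ x u _ hx hu (box_convex hwo hw tw01).
  by split.
have [M hM] := choice hrow.
pose Jx' := \matrix_(i, j) (M i).1.1 i j.
pose Ju' := \matrix_(i, j) (M i).1.2 i j.
pose Jw' := \matrix_(i, j) (M i).2 i j.
have hJx' : in_imx Jx' Jx.
  by split => i j; rewrite mxE; have [[h1 h2] _ _ _] := hM i; [exact: h1|exact: h2].
have hJu' : in_imx Ju' Ju.
  by split => i j; rewrite mxE; have [_ [h1 h2] _ _] := hM i; [exact: h1|exact: h2].
have hJw' : in_imx Jw' Jw.
  by split => i j; rewrite mxE; have [_ _ [h1 h2] _] := hM i; [exact: h1|exact: h2].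
have fx : f x u w - f xo uo wo =
    Jx' *m x - Jx' *m xo + (Ju' *m u - Ju' *m uo) + (Jw' *m w - Jw' *m wo).
  apply/matrixP => i j; rewrite -!mulmxBr (ord1 j).
  have [_ _ _ ->] := hM i.
  by rewrite 2![in RHS]mxE /Jx' /Ju' /Jw' !rowmul.
pose d := u - C' *m y.
have hd : in_imx d (dlo', dhi').
  have [h1 h2] := hC' y hyb; split => i j; rewrite /d !mxE.
    by have := h1 i j; rewrite !mxE /N' -/x -/u; lra.
  by have := h2 i j; rewrite !mxE /N' -/x -/u; lra.
have e : f x u w = (Jx' + Ju' *m (C' *m T)) *m x + Ju' *m d +
   (- (Jx' *m xo) + - (Ju' *m uo) + Jw' *m (w + - wo) + f xo uo wo).
  rewrite mulmxDl /d mulmxBr mulmxDr mulmxN.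
  have -> : Ju' *m (C' *m T) *m x = Ju' *m (C' *m y).
    by rewrite -!mulmxA /x (mulmxA T) mulmxV // mul1mx.
  exact: zid fx.
rewrite /gc -/x /N' -/x -/u e (mulmxDr T) (mulmxDr T).
apply: in_imx_add; first apply: in_imx_add.
- apply: in_imx_mul; first exact: in_imx_pt.
  apply: in_imx_mul; first by apply: in_imx_add => //; apply: in_imx_mul => //; exact: in_imx_pt.
  by apply: in_imx_mul => //; exact: in_imx_pt.
- apply: in_imx_mul; first exact: in_imx_pt.
  exact: in_imx_mul.
- apply: in_imx_mul; first exact: in_imx_pt.
  rewrite /Rv /Rbox; apply: in_imx_add; last exact: in_imx_pt.
  apply: in_imx_add; first apply: in_imx_add.
  + by apply: in_imx_opp; apply: in_imx_mul => //; exact: in_imx_pt.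
  + by apply: in_imx_opp; apply: in_imx_mul => //; exact: in_imx_pt.
  + apply: in_imx_mul => //; apply: in_imx_add => //; exact: in_imx_pt.
Qed.
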